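(* Let $X$ be a normed space and let $Y$ be a topological vector space ordered by a closed convex pointed cone $K$. Let $\alpha:\mathbb{R}_+\to\mathbb{R}_+$ be nondecreasing with $\lim_{t\to0^+}\alpha(t)/t=0$. Let $A\subset X$ be convex, $k_0\in K\setminus\{0\}$, and let $F:X\to Y$ be strongly $\alpha(\cdot)$-$k_0$ paraconvex on $A$ with constant $C\ge0$. Let $x_0\in A$ and $h\in X$ with $\|h\|=1$ be such that there is $\delta_0>0$ with $x_0+th\in A$ for all $t\in(-\delta_0,\delta_0)$. Define, for $0<t<\delta_0$, $$\phi(t):=\frac{F(x_0+th)-F(x_0)}{t}+C\,\frac{\alpha(t)}{t}\,k_0.$$ Then there exist $b\in Y$ and $\delta>0$ such that $\phi(t)-b\in K$ for all $0<t<\delta$.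
   Context: A cone $K$ is pointed if $K\cap(-K)=\{0\}$. For a convex cone $K\subset Y$, write $x\le_K y$ iff $y-x\in K$. A mapping $F:X\to Y$ is strongly $\alpha(\cdot)$-$k_0$ paraconvex on a convex set $A\subset X$ with constant $C\ge0$ (where $k_0\in K$) if for all $x_1,x_2\in A$ and all $\lambda\in[0,1]$, $$F(\lambda x_1+(1-\lambda)x_2)\le_K \lambda F(x_1)+(1-\lambda)F(x_2)+C\min\{\lambda,1-\lambda\}\,\alpha(\|x_1-x_2\|)\,k_0.$$ *)

(* Defs.v *)
From Stdlib Require Import Reals.
Open Scope R_scope.

Record RVS := {
  vcar :> Type;
  vadd : vcar -> vcar -> vcar;
  vzero : vcar;
  vopp : vcar -> vcar;
  vscal : R -> vcar -> vcar;
  vadd_assoc : forall x y z, vadd x (vadd y z) = vadd (vadd x y) z;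
  vadd_comm : forall x y, vadd x y = vadd y x;
  vadd_0 : forall x, vadd x vzero = x;
  vadd_opp : forall x, vadd x (vopp x) = vzero;
  vscal_assoc : forall a b x, vscal a (vscal b x) = vscal (a * b) x;
  vscal_1 : forall x, vscal 1 x = x;
  vscal_distr_v : forall a x y, vscal a (vadd x y) = vadd (vscal a x) (vscal a y);
  vscal_distr_s : forall a b x, vscal (a + b) x = vadd (vscal a x) (vscal b x)
}.

Arguments vadd {_}. Arguments vzero {_}. Arguments vopp {_}. Arguments vscal {_}.

Definition vsub {V : RVS} (x y : V) : V := vadd x (vopp y).

Record NormedSpace := {
  ns_vs :> RVS;
  norm : ns_vs -> R;
  norm_nonneg : forall x, 0 <= norm x;
  norm_eq0 : forall x, norm x = 0 -> x = vzero;
  norm_triangle : forall x y, norm (vadd x y) <= norm x + norm y;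
  norm_homog : forall a x, norm (vscal a x) = Rabs a * norm x
}.
Arguments norm {_}.

Record TVS := {
  tvs_vs :> RVS;
  is_open : (tvs_vs -> Prop) -> Prop;
  open_full : is_open (fun _ => True);
  open_empty : is_open (fun _ => False);
  open_inter : forall U W, is_open U -> is_open W -> is_open (fun x => U x /\ W x);
  open_union : forall (I : Type) (U : I -> tvs_vs -> Prop),
      (forall i, is_open (U i)) -> is_open (fun x => exists i, U i x);
  add_continuous : forall U x y, is_open U -> U (vadd x y) ->
      exists V W, is_open V /\ is_open W /\ V x /\ W y /\
        (forall x' y', V x' -> W y' -> U (vadd x' y'));
  scal_continuous : forall U a x, is_open U -> U (vscal a x) ->
      exists d V, 0 < d /\ is_open V /\ V x /\
        (forall b x', Rabs (b - a) < d -> V x' -> U (vscal b x'))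
}.
Arguments is_open {_}.

Definition is_closed {Y : TVS} (K : Y -> Prop) : Prop :=
  is_open (fun y => ~ K y).

Definition is_cone {Y : RVS} (K : Y -> Prop) : Prop :=
  forall (l : R) (y : Y), 0 <= l -> K y -> K (vscal l y).

Definition is_convex {Y : RVS} (A : Y -> Prop) : Prop :=
  forall (x1 x2 : Y) (l : R), A x1 -> A x2 -> 0 <= l <= 1 ->
    A (vadd (vscal l x1) (vscal (1 - l) x2)).

Definition is_convex_cone {Y : RVS} (K : Y -> Prop) : Prop :=
  is_cone K /\ is_convex K.

Definition is_pointed {Y : RVS} (K : Y -> Prop) : Prop :=
  forall y : Y, (K y /\ K (vopp y)) <-> y = vzero.

Definition leK {Y : RVS} (K : Y -> Prop) (x y : Y) : Prop := K (vsub y x).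

Definition strongly_paraconvex {X : NormedSpace} {Y : RVS} (K : Y -> Prop)
    (alpha : R -> R) (k0 : Y) (F : X -> Y) (A : X -> Prop) (C : R) : Prop :=
  forall (x1 x2 : X) (l : R), A x1 -> A x2 -> 0 <= l <= 1 ->
    leK K (F (vadd (vscal l x1) (vscal (1 - l) x2)))
          (vadd (vadd (vscal l (F x1)) (vscal (1 - l) (F x2)))
                (vscal (C * Rmin l (1 - l) * alpha (norm (vsub x1 x2))) k0)).

(* Main.v *)
Require Import Defs.
From Stdlib Require Import Reals Lra.
Open Scope R_scope.

Section Lin.
Variable V : RVS.

Lemma add0l (x : V) : vadd vzero x = x.
Proof. rewrite vadd_comm; apply vadd_0. Qed.

Lemma scal0 (x : V) : vscal 0 x = vzero.
Proof.
  assert (E : vscal 0 x = vadd (vscal 0 x) (vscal 0 x)).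
  { rewrite <- vscal_distr_s. f_equal. ring. }
  set (y := vscal 0 x) in *.
  transitivity (vadd (vadd y y) (vopp y)).
  - rewrite <- vadd_assoc, vadd_opp, vadd_0. reflexivity.
  - rewrite <- E. apply vadd_opp.
Qed.

Lemma opp_uniq (x y : V) : vadd x y = vzero -> vopp x = y.
Proof.
  intro H. rewrite <- (vadd_0 V (vopp x)). rewrite <- H.
  rewrite vadd_assoc. rewrite (vadd_comm V (vopp x) x), vadd_opp. apply add0l.
Qed.

Lemma add4 (a b c d : V) :
  vadd (vadd a b) (vadd c d) = vadd (vadd a c) (vadd b d).
Proof.
  rewrite <- !vadd_assoc. f_equal. rewrite !vadd_assoc. f_equal. apply vadd_comm.
Qed.

Definition lc (u1 u2 u3 u4 : V) a b c d :=
  vadd (vadd (vscal a u1) (vscal b u2)) (vadd (vscal c u3) (vscal d u4)).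

Lemma lc_add u1 u2 u3 u4 a b c d a' b' c' d' :
  vadd (lc u1 u2 u3 u4 a b c d) (lc u1 u2 u3 u4 a' b' c' d')
  = lc u1 u2 u3 u4 (a+a') (b+b') (c+c') (d+d').
Proof.
  unfold lc. rewrite add4. rewrite (add4 (vscal a u1)). rewrite (add4 (vscal c u3)).
  rewrite !vscal_distr_s. reflexivity.
Qed.

Lemma lc_scal u1 u2 u3 u4 r a b c d :
  vscal r (lc u1 u2 u3 u4 a b c d) = lc u1 u2 u3 u4 (r*a) (r*b) (r*c) (r*d).
Proof. unfold lc. rewrite !vscal_distr_v, !vscal_assoc. reflexivity. Qed.

Lemma lc_zero u1 u2 u3 u4 : vzero = lc u1 u2 u3 u4 0 0 0 0.
Proof. unfold lc. rewrite !scal0, !vadd_0. reflexivity. Qed.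

Lemma lc_opp u1 u2 u3 u4 a b c d :
  vopp (lc u1 u2 u3 u4 a b c d) = lc u1 u2 u3 u4 (-a) (-b) (-c) (-d).
Proof.
  apply opp_uniq. rewrite lc_add, (lc_zero u1 u2 u3 u4). f_equal; ring.
Qed.

Inductive ex : Type :=
 | At1 | At2 | At3 | At4 | Zero | Add (e f : ex) | Sub (e f : ex) | Opp (e : ex)
 | Scal (r : R) (e : ex).

Fixpoint ev (u1 u2 u3 u4 : V) (e : ex) : V :=
  match e with
  | At1 => u1 | At2 => u2 | At3 => u3 | At4 => u4 | Zero => vzero
  | Add e f => vadd (ev u1 u2 u3 u4 e) (ev u1 u2 u3 u4 f)
  | Sub e f => vsub (ev u1 u2 u3 u4 e) (ev u1 u2 u3 u4 f)
  | Opp e => vopp (ev u1 u2 u3 u4 e)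
  | Scal r e => vscal r (ev u1 u2 u3 u4 e)
  end.

Fixpoint cf (i : nat) (e : ex) : R :=
  match e with
  | At1 => match i with 1%nat => 1 | _ => 0 end
  | At2 => match i with 2%nat => 1 | _ => 0 end
  | At3 => match i with 3%nat => 1 | _ => 0 end
  | At4 => match i with 4%nat => 1 | _ => 0 end
  | Zero => 0
  | Add e f => cf i e + cf i f
  | Sub e f => cf i e + - cf i f
  | Opp e => - cf i e
  | Scal r e => r * cf i e
  end.

Lemma ev_lc u1 u2 u3 u4 e :
  ev u1 u2 u3 u4 e = lc u1 u2 u3 u4 (cf 1 e) (cf 2 e) (cf 3 e) (cf 4 e).
Proof.
  induction e; simpl.
  - unfold lc. rewrite !scal0, vscal_1, !vadd_0. reflexivity.
  - unfold lc. rewrite !scal0, vscal_1, !vadd_0, add0l. reflexivity.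
  - unfold lc. rewrite !scal0, vscal_1, !vadd_0, add0l. reflexivity.
  - unfold lc. rewrite !scal0, vscal_1, !vadd_0, !add0l. reflexivity.
  - apply lc_zero.
  - rewrite IHe1, IHe2, lc_add. reflexivity.
  - unfold vsub. rewrite IHe1, IHe2, lc_opp, lc_add. reflexivity.
  - rewrite IHe, lc_opp. reflexivity.
  - rewrite IHe, lc_scal. reflexivity.
Qed.
End Lin.

Ltac reify u1 u2 u3 u4 t :=
  lazymatch t with
  | vadd ?a ?b => let ra := reify u1 u2 u3 u4 a in let rb := reify u1 u2 u3 u4 b in
                  constr:(Add ra rb)
  | vsub ?a ?b => let ra := reify u1 u2 u3 u4 a in let rb := reify u1 u2 u3 u4 b in
                  constr:(Sub ra rb)
  | vopp ?a => let ra := reify u1 u2 u3 u4 a in constr:(Opp ra)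
  | vscal ?r ?a => let ra := reify u1 u2 u3 u4 a in constr:(Scal r ra)
  | vzero => constr:(Zero)
  | u1 => constr:(At1)
  | u2 => constr:(At2)
  | u3 => constr:(At3)
  | u4 => constr:(At4)
  end.

Ltac lin_eq u1 u2 u3 u4 :=
  match goal with |- ?l = ?r =>
    let el := reify u1 u2 u3 u4 l in let er := reify u1 u2 u3 u4 r in
    change (ev _ u1 u2 u3 u4 el = ev _ u1 u2 u3 u4 er);
    rewrite !ev_lc; cbn [cf]; unfold lc; f_equal; f_equal; f_equal
  end.

Lemma Kadd (Y : RVS) (K : Y -> Prop) : is_convex_cone K ->
  forall x y, K x -> K y -> K (vadd x y).
Proof.
  intros [Hc Hv] x y Hx Hy.
  assert (H := Hc 2 _ ltac:(lra) (Hv x y (/2) Hx Hy ltac:(lra))).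
  replace (vadd x y) with (vscal 2 (vadd (vscal (/ 2) x) (vscal (1 - / 2) y))).
  exact H.
  lin_eq x y x y; field.
Qed.

Theorem proposition3p2
  (X : NormedSpace) (Y : TVS) (K : Y -> Prop)
  (HKclosed : is_closed K) (HKconv : is_convex_cone K) (HKpointed : is_pointed K)
  (alpha : R -> R)
  (Halpha_nonneg : forall t, 0 <= t -> 0 <= alpha t)
  (Halpha_mono : forall s t, 0 <= s -> s <= t -> alpha s <= alpha t)
  (Halpha_lim : forall eps, 0 < eps -> exists d, 0 < d /\
       forall t, 0 < t < d -> Rabs (alpha t / t) < eps)
  (A : X -> Prop) (HA : is_convex A)
  (k0 : Y) (Hk0 : K k0) (Hk0nz : k0 <> vzero)
  (F : X -> Y) (C : R) (HC : 0 <= C)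
  (HF : strongly_paraconvex K alpha k0 F A C)
  (x0 h : X) (Hx0 : A x0) (Hh : norm h = 1)
  (delta0 : R) (Hdelta0 : 0 < delta0)
  (Hline : forall t, - delta0 < t < delta0 -> A (vadd x0 (vscal t h))) :
  let phi := fun t : R =>
    vadd (vscal (/ t) (vsub (F (vadd x0 (vscal t h))) (F x0)))
         (vscal (C * (alpha t / t)) k0) in
  exists (b : Y) (delta : R), 0 < delta /\
    forall t, 0 < t < delta -> K (vsub (phi t) b).
Proof.
  intros phi.
  set (s := delta0 / 2).
  assert (Hs : 0 < s) by (unfold s; lra).
  assert (Hs2 : 2 * s = delta0) by (unfold s; lra).
  exists (vsub (vscal (/ s) (vsub (F x0) (F (vadd x0 (vscal (- s) h)))))
               (vscal (C * alpha (2 * s) / s) k0)), s.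
  split; [exact Hs|].
  intros t [Ht0 Hts].
  unfold phi; cbv beta.
  set (x1 := vadd x0 (vscal t h)).
  set (x2 := vadd x0 (vscal (- s) h)).
  assert (A1 : A x1) by (apply Hline; lra).
  assert (A2 : A x2) by (apply Hline; lra).
  set (l := s / (t + s)).
  assert (Hl0 : 0 < l) by (unfold l; apply Rdiv_lt_0_compat; lra).
  assert (H1l : 1 - l = t / (t + s)) by (unfold l; field; lra).
  assert (Hl1 : 0 < t / (t + s)) by (apply Rdiv_lt_0_compat; lra).
  assert (H := HF x1 x2 l A1 A2 ltac:(lra)).
  assert (Hx : vadd (vscal l x1) (vscal (1 - l) x2) = x0).
  { unfold x1, x2. lin_eq x0 h x0 h; unfold l; field; lra. }
  assert (Hn : norm (vsub x1 x2) = t + s).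
  { replace (vsub x1 x2) with (vscal (t + s) h).
    - rewrite norm_homog, Hh, Rabs_right; lra.
    - unfold x1, x2. lin_eq x0 h x0 h; ring. }
  rewrite Hx, Hn in H. unfold leK in H.
  set (m := Rmin l (1 - l)) in H.
  set (k := (t + s) / (s * t)).
  assert (Hk : 0 < k) by (unfold k; apply Rdiv_lt_0_compat; nra).
  set (d := C * (alpha t / t) + C * alpha (2 * s) / s - C * m * alpha (t + s) * k).
  assert (Hd : 0 <= d).
  { assert (Hm0 : 0 <= m) by (apply Rmin_glb; lra).
    assert (Hm1 : m <= 1 - l) by apply Rmin_r.
    assert (Ha : 0 <= alpha (t + s)) by (apply Halpha_nonneg; lra).
    assert (Ha2 : alpha (t + s) <= alpha (2 * s)) by (apply Halpha_mono; lra).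
    assert (Hat : 0 <= alpha t / t).
    { unfold Rdiv; apply Rmult_le_pos; [apply Halpha_nonneg; lra|].
      left; apply Rinv_0_lt_compat; lra. }
    assert (Hmk : m * k <= / s).
    { apply Rle_trans with ((1 - l) * k).
      - apply Rmult_le_compat_r; lra.
      - right. rewrite H1l. unfold k. field. lra. }
    assert (E1 : C * m * alpha (t + s) * k = (C * alpha (t + s)) * (m * k)) by ring.
    assert (E2 : C * alpha (2 * s) / s = (C * alpha (2 * s)) * / s) by (unfold Rdiv; ring).
    assert (P1 : (C * alpha (t + s)) * (m * k) <= (C * alpha (t + s)) * / s).
    { apply Rmult_le_compat_l; [apply Rmult_le_pos|]; lra. }
    assert (P2 : (C * alpha (t + s)) * / s <= (C * alpha (2 * s)) * / s).
    { apply Rmult_le_compat_r; [left; apply Rinv_0_lt_compat; lra|].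
      apply Rmult_le_compat_l; lra. }
    assert (P3 : 0 <= C * (alpha t / t)) by (apply Rmult_le_pos; lra).
    unfold d. rewrite E1, E2. lra. }
  destruct HKconv as [Hcone Hconv].
  match type of H with K ?P =>
    assert (HK : K (vadd (vscal k P) (vscal d k0)))
  end.
  { apply Kadd; [split; assumption| |]; apply Hcone; try assumption; lra. }
  match type of HK with K ?Q => match goal with |- K ?G =>
    replace G with Q; [exact HK|] end end.
  lin_eq (F x1) (F x2) (F x0) k0; unfold d, k, l; field; lra.
Qed.
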